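(* Let $\mathcal C$ be a coalgebra, $g\in\mathcal C$ a group-like element and $\Lambda\in\mathcal C$. If $g\in{}_\Lambda\mathcal V$ then $\dim L^g_{\mathcal V_\Lambda}=1$, and otherwise $\dim L^g_{\mathcal V_\Lambda}=0$. Moreover, an element $\phi\in L^g_{\mathcal V_\Lambda}$ is non-zero if and only if $\phi(\Lambda)\neq0$.
   Context: $k$ is a field; $\mathcal C$ is a coalgebra over $k$ with comultiplication $\Delta$ and dual $\mathcal C'$. A group-like element is a non-zero $g$ with $\Delta(g)=g\otimes g$. A left coideal is a subspace $V$ with $\Delta(V)\subset\mathcal C\otimes V$. For $\Lambda\in\mathcal C$, $\mathcal V_\Lambda=\{(\nu\otimes\mathrm{id})\Delta(\Lambda):\nu\in\mathcal C'\}$ (the smallest left coideal containing $\Lambda$) and ${}_\Lambda\mathcal V=\{(\mathrm{id}\otimes\nu)\Delta(\Lambda):\nu\in\mathcal C'\}$. For a left coideal $V$ and group-like $g$, a $g$-cointegral on $V$ is $\phi\in V'$ with $(\mathrm{id}\otimes\phi)(\Delta(a))=\phi(a)g$ for all $a\in V$; $L^g_V$ denotes the space of $g$-cointegrals on $V$. *)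

(* Defs.v *)
From HB Require Import structures.
From mathcomp Require Import all_boot all_order all_algebra.
Set Implicit Arguments. Unset Strict Implicit. Unset Printing Implicit Defensive.
Import GRing.Theory.
Local Open Scope ring_scope.

(* Elements of C ⊗ C are represented by finite formal sums  Σ a_i ⊗ b_i,
   i.e. by sequences of pairs.  Two such sums denote the same tensor iff
   they pair equally with every ν ⊗ μ, ν, μ ∈ C' (over a field the
   functionals ν ⊗ μ separate the points of C ⊗ C). *)
Section Coalg.
Variables (k : fieldType) (C : lmodType k).

Definition lfun (f : C -> k) : Prop :=
  forall (c : k) (x y : C), f (c *: x + y) = c * f x + f y.

Definition tpair (nu mu : C -> k) (t : seq (C * C)) : k :=
  \sum_(p <- t) nu p.1 * mu p.2.

Definition teq (t1 t2 : seq (C * C)) : Prop :=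
  forall nu mu, lfun nu -> lfun mu -> tpair nu mu t1 = tpair nu mu t2.

Record coalgebra (Delta : C -> seq (C * C)) (eps : C -> k) : Prop := {
  coalg_eps_lin : lfun eps;
  coalg_Delta_lin : forall nu mu, lfun nu -> lfun mu ->
    forall (c : k) (x y : C),
      tpair nu mu (Delta (c *: x + y)) =
      c * tpair nu mu (Delta x) + tpair nu mu (Delta y);
  (* (Δ ⊗ id) Δ = (id ⊗ Δ) Δ, tested against ν1 ⊗ ν2 ⊗ ν3 *)
  coalg_coassoc : forall n1 n2 n3, lfun n1 -> lfun n2 -> lfun n3 ->
    forall a : C,
      \sum_(p <- Delta a) tpair n1 n2 (Delta p.1) * n3 p.2 =
      \sum_(p <- Delta a) n1 p.1 * tpair n2 n3 (Delta p.2);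
  coalg_counitl : forall a : C, \sum_(p <- Delta a) eps p.1 *: p.2 = a;
  coalg_counitr : forall a : C, \sum_(p <- Delta a) eps p.2 *: p.1 = a
}.

Definition grouplike (Delta : C -> seq (C * C)) (g : C) : Prop :=
  g != 0 /\ teq (Delta g) [:: (g, g)].

(* 𝒱_Λ = { (ν ⊗ id) Δ(Λ) : ν ∈ C' } *)
Definition VL (Delta : C -> seq (C * C)) (L : C) : C -> Prop :=
  fun x => exists nu, lfun nu /\ x = \sum_(p <- Delta L) nu p.1 *: p.2.

(* _Λ𝒱 = { (id ⊗ ν) Δ(Λ) : ν ∈ C' } *)
Definition LV (Delta : C -> seq (C * C)) (L : C) : C -> Prop :=
  fun x => exists nu, lfun nu /\ x = \sum_(p <- Delta L) nu p.2 *: p.1.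

(* An element of V' is represented by a function C -> k which is linear
   on V; two such functions denote the same element of V' iff they agree
   on V. *)
Definition dual_on (V : C -> Prop) (phi : C -> k) : Prop :=
  forall (c : k) (x y : C), V x -> V y -> phi (c *: x + y) = c * phi x + phi y.

(* φ ∈ L^g_V : φ ∈ V' and (id ⊗ φ)(Δ a) = φ(a) g for all a ∈ V, where
   (id ⊗ φ) is applied to any representative Σ a_i ⊗ b_i of Δ(a) with all
   b_i ∈ V (i.e. a witness of Δ(a) ∈ C ⊗ V). *)
Definition cointegral (Delta : C -> seq (C * C)) (g : C) (V : C -> Prop)
  (phi : C -> k) : Prop :=
  dual_on V phi /\
  forall a, V a -> forall t : seq (C * C),
    teq t (Delta a) -> (forall p, p \in t -> V p.2) ->
    \sum_(p <- t) phi p.2 *: p.1 = phi a *: g.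

Definition nonzero_on (V : C -> Prop) (phi : C -> k) : Prop :=
  exists x, V x /\ phi x != 0.

Definition dim_one (Delta : C -> seq (C * C)) (g : C) (V : C -> Prop) : Prop :=
  exists phi0, cointegral Delta g V phi0 /\ nonzero_on V phi0 /\
    forall phi, cointegral Delta g V phi ->
      exists c : k, forall x, V x -> phi x = c * phi0 x.

Definition dim_zero (Delta : C -> seq (C * C)) (g : C) (V : C -> Prop) : Prop :=
  forall phi, cointegral Delta g V phi -> forall x, V x -> phi x = 0.

End Coalg.

(* Main.v *)
Require Import Defs.
From HB Require Import structures.
From mathcomp Require Import all_boot all_order all_algebra.
From mathcomp Require Import boolp classical_sets.
From Stdlib Require List.
Set Implicit Arguments. Unset Strict Implicit. Unset Printing Implicit Defensive.
Import GRing.Theory.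
Local Open Scope ring_scope.

Section Sep.
Variables (k : fieldType) (C : lmodType k).

Definition subsp (M : C -> Prop) := M 0 /\ forall (c : k) x y, M x -> M y -> M (c *: x + y).

Lemma subspZ M c x : subsp M -> M x -> M (c *: x).
Proof. by move=> [M0 MC] Mx; rewrite -[c *: x]addr0; apply: MC. Qed.
Lemma subspD M x y : subsp M -> M x -> M y -> M (x + y).
Proof. by move=> [M0 MC] Mx My; rewrite -[x]scale1r; apply: MC. Qed.
Lemma subspN M x : subsp M -> M x -> M (- x).
Proof. by move=> sM Mx; rewrite -scaleN1r; apply: subspZ. Qed.
Lemma subspB M x y : subsp M -> M x -> M y -> M (x - y).
Proof. by move=> sM Mx My; apply: subspD => //; apply: subspN. Qed.

Lemma sep (U : C -> Prop) (u : C) : subsp U -> ~ U u ->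
  exists f, lfun f /\ (forall x, U x -> f x = 0) /\ f u = 1.
Proof.
move=> sU nUu.
pose good (M : C -> Prop) := subsp M /\ (forall x, U x -> M x) /\ ~ M u.
pose P : set (set C) := fun M => M = set0 \/ good M.
have [A [PA Amax]] : exists A, P A /\ forall B, (A `<` B)%classic -> ~ P B.
  apply: Zorn_bigcup => F FP Ftot.
  have Fgood M x : F M -> M x -> good M.
    move=> FM Mx; case: (FP M FM) => // M0; by move: Mx; rewrite M0.
  case: (pselect (exists M, F M /\ good M)) => [[M0 [FM0 gM0]]|nog].
  - right; split; [split|split].
    + by exists M0 => //; case: gM0 => [[]].
    + move=> c x y [Mx FMx xM] [My FMy yM].
      have gx := Fgood _ _ FMx xM; have gy := Fgood _ _ FMy yM.
      case: (Ftot _ _ FMx FMy) => [sub|sub].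
      * exists My => //; case: gy => [[_ H] _]; apply: H => //; exact: sub.
      * exists Mx => //; case: gx => [[_ H] _]; apply: H => //; exact: sub.
    + by move=> x Ux; exists M0 => //; case: gM0 => _ [H _]; apply: H.
    + move=> [M FM Mu]; have [_ [_ H]] := Fgood _ _ FM Mu; exact: H.
  - left; apply/seteqP; split => x // [M FM Mx].
    by exfalso; apply: nog; exists M; split => //; exact: Fgood Mx.
have gA : good A.
  case: PA => // A0; exfalso; apply: (Amax U); last by right; split.
  rewrite A0; split => // sub; have := sub 0; case: sU => U0 _; by move/(_ U0).
case: gA => sA [UA nAu].
have uniq x c d : A (x - c *: u) -> A (x - d *: u) -> c = d.
  move=> Hc Hd; apply: contrapT => cd.
  have : A ((c - d)^-1 *: ((x - d *: u) - (x - c *: u))).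
    by apply: subspZ => //; apply: subspB.
  have -> : (x - d *: u) - (x - c *: u) = (c - d) *: u.
    by rewrite scalerBl opprB addrC addrA addrNK.
  rewrite scalerA mulVf ?scale1r //; last by rewrite subr_eq0; apply/eqP.
have span x : exists c, A (x - c *: u).
  apply: contrapT => Hn.
  pose B := fun y => exists m d, A m /\ y = m + d *: x.
  apply: (Amax B).
    split.
      by move=> m Am; exists m, 0; rewrite scale0r addr0.
    move=> sub; apply: Hn; exists 0; rewrite scale0r subr0; apply: sub.
    by exists 0, 1; rewrite add0r scale1r; split => //; case: sA.
  right; split; [split|split].
  - by exists 0, 0; rewrite scale0r addr0; split => //; case: sA.
  - move=> c y z [m1 [d1 [Am1 ->]]] [m2 [d2 [Am2 ->]]].
    exists (c *: m1 + m2), (c * d1 + d2); split; first by case: sA => _; apply.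
    by rewrite scalerDr scalerDl scalerA addrACA.
  - by move=> y Uy; exists y, 0; rewrite scale0r addr0; split => //; apply: UA.
  - move=> [m [d [Am ud]]].
    case: (eqVneq d 0) => [d0|dn0].
      by apply: nAu; move: ud; rewrite d0 scale0r addr0 => ->.
    apply: Hn; exists d^-1.
    have -> : x - d^-1 *: u = - (d^-1 *: m).
      by rewrite ud scalerDr scalerA mulVf // scale1r opprD addrCA subrr addr0.
    by apply: subspN => //; apply: subspZ.
pose f x := proj1_sig (cid (span x)).
have fP x : A (x - f x *: u) by rewrite /f; case: cid.
exists f; split; [|split].
- move=> c x y; apply: (uniq (c *: x + y)) (fP _) _.
  have -> : c *: x + y - (c * f x + f y) *: u = c *: (x - f x *: u) + (y - f y *: u).
    by rewrite scalerDl -scalerA scalerBr opprD addrACA.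
  by case: sA => _; apply.
- move=> x Ux; apply: (uniq x) (fP _) _; rewrite scale0r subr0; exact: UA.
- by apply: (uniq u) (fP _) _; rewrite scale1r subrr; case: sA.
Qed.


Lemma lfun0 (f : C -> k) : lfun f -> f 0 = 0.
Proof.
move=> lf; have := lf 1 0 0; rewrite scale1r addr0 mul1r => H.
by apply: (addrI (f 0)); rewrite addr0 -H.
Qed.
Lemma lfunD (f : C -> k) x y : lfun f -> f (x + y) = f x + f y.
Proof. by move=> lf; rewrite -{1}[x]scale1r lf mul1r. Qed.
Lemma lfunZ (f : C -> k) c x : lfun f -> f (c *: x) = c * f x.
Proof. by move=> lf; rewrite -[c *: x]addr0 lf lfun0 // addr0. Qed.
Lemma lfunN (f : C -> k) x : lfun f -> f (- x) = - f x.
Proof. by move=> lf; rewrite -scaleN1r lfunZ // mulN1r. Qed.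
Lemma lfunB (f : C -> k) x y : lfun f -> f (x - y) = f x - f y.
Proof. by move=> lf; rewrite lfunD // lfunN. Qed.
Lemma lfun_sum (f : C -> k) (I : Type) (s : seq I) (F : I -> C) :
  lfun f -> f (\sum_(i <- s) F i) = \sum_(i <- s) f (F i).
Proof.
move=> lf; elim: s => [|a s IH]; first by rewrite !big_nil lfun0.
by rewrite !big_cons lfunD // IH.
Qed.

Lemma vsep (u w : C) : (forall nu, lfun nu -> nu u = nu w) -> u = w.
Proof.
move=> H; apply: contrapT => uw.
have s0 : subsp (fun x : C => x = 0) by split => // c x y -> ->; rewrite scaler0 addr0.
have nu0 : ~ (u - w = 0) by move/eqP; rewrite subr_eq0 => /eqP /uw.
have [f [lf [_ fu]]] := sep s0 nu0.
by move: fu; rewrite lfunB // H // subrr => /eqP; rewrite eq_sym oner_eq0.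
Qed.

Lemma sep1 (u : C) : u != 0 -> exists f, lfun f /\ f u = 1.
Proof.
move=> u0.
have s0 : subsp (fun x : C => x = 0) by split => // c x y -> ->; rewrite scaler0 addr0.
have nu0 : ~ (u = 0) by move=> H; move: u0; rewrite H eqxx.
have [f [lf [_ fu]]] := sep s0 nu0.
by exists f.
Qed.

Definition Sm (pl : seq ((C -> k) * C)) (x : C) := \sum_(q <- pl) q.1 x *: q.2.

Lemma Sm_lin pl c x y : (forall q, List.In q pl -> lfun q.1) ->
  Sm pl (c *: x + y) = c *: Sm pl x + Sm pl y.
Proof.
rewrite /Sm; elim: pl => [|q pl IH] H; first by rewrite !big_nil scaler0 addr0.
rewrite !big_cons IH; last by move=> q' Hq'; apply: H; right.
rewrite H /=; last by left.
by rewrite scalerDl -scalerA scalerDr addrACA.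
Qed.

Lemma proj_ex (s : seq C) : exists pl : seq ((C -> k) * C),
  (forall q, List.In q pl -> lfun q.1) /\ forall x, x \in s -> Sm pl x = x.
Proof.
elim: s => [|a s [pl [Hl Hs]]]; first by exists [::].
pose r := a - Sm pl a.
case: (eqVneq r 0) => [r0|rn0].
  exists pl; split => // x; rewrite in_cons => /orP[/eqP ->|xs]; last exact: Hs.
  by move/eqP: r0; rewrite subr_eq0 => /eqP.
have [f [lf fr]] := sep1 rn0.
pose h x := f (x - Sm pl x).
have lh : lfun h.
  move=> c x y; rewrite /h Sm_lin //.
  have -> : c *: x + y - (c *: Sm pl x + Sm pl y) = c *: (x - Sm pl x) + (y - Sm pl y).
    by rewrite scalerBr opprD addrACA.
  by rewrite lf.
exists ((h, r) :: pl); split.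
  by move=> q [<-|] //; apply: Hl.
move=> x; rewrite /Sm big_cons /= -/(Sm pl x) in_cons => /orP[/eqP ->|xs].
  by rewrite /h -/r fr scale1r /r subrK.
by rewrite Hs // /h Hs // subrr lfun0 // scale0r add0r.
Qed.

Lemma in_map_inv (I : Type) (F : I -> C * C) (pl : seq I) p :
  p \in [seq F q | q <- pl] -> exists q, List.In q pl /\ p = F q.
Proof.
elim: pl => [|q pl IH] //=; rewrite in_cons => /orP[/eqP ->|/IH [q' [Hq' ->]]].
  by exists q; split => //; left.
by exists q'; split => //; right.
Qed.

Lemma dual_sum (V : C -> Prop) (phi : C -> k) (I : Type) (s : seq I)
    (c : I -> k) (v : I -> C) :
  subsp V -> dual_on V phi -> (forall i, List.In i s -> V (v i)) ->
  V (\sum_(i <- s) c i *: v i) /\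
  phi (\sum_(i <- s) c i *: v i) = \sum_(i <- s) c i * phi (v i).
Proof.
move=> sV dphi; elim: s => [|a s IH] H.
  rewrite !big_nil; split; first by case: sV.
  case: sV => V0 _; have := dphi 1 0 0 V0 V0; rewrite scale1r addr0 mul1r => H0.
  by apply: (addrI (phi 0)); rewrite addr0 -H0.
have [Vs ps] := IH (fun i Hi => H i (or_intror Hi)).
have Va := H a (or_introl erefl).
rewrite !big_cons; split; first by case: sV => _; apply.
by rewrite dphi // ps.
Qed.

Section Coal.
Variables (Delta : C -> seq (C * C)) (eps : C -> k) (HC : coalgebra Delta eps).
Variable L : C.

Definition Xn (nu : C -> k) := \sum_(p <- Delta L) nu p.1 *: p.2.

Lemma VL_subsp : subsp (VL Delta L).
Proof.
split.
  exists (fun _ => 0); split; first by move=> c x y; rewrite mulr0 addr0.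
  by rewrite big1 // => p _; rewrite scale0r.
move=> c x y [nu [lnu ->]] [mu [lmu ->]].
exists (fun z => c * nu z + mu z); split.
  by move=> d a b; rewrite lnu lmu mulrDr mulrA (mulrC c d) -mulrA addrACA -mulrDr.
rewrite scaler_sumr -big_split /=; apply: eq_bigr => p _.
by rewrite scalerDl scalerA.
Qed.

Lemma tpair_Delta0 nu mu : lfun nu -> lfun mu -> tpair nu mu (Delta 0) = 0.
Proof.
move=> ln lm; have := coalg_Delta_lin HC ln lm 1 0 0.
rewrite scale1r addr0 mul1r => H.
by apply: (addrI (tpair nu mu (Delta 0))); rewrite addr0 -H.
Qed.

Lemma tpair_Delta_sum nu mu (I : Type) (s : seq I) (c : I -> k) (v : I -> C) :
  lfun nu -> lfun mu ->
  tpair nu mu (Delta (\sum_(i <- s) c i *: v i)) =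
  \sum_(i <- s) c i * tpair nu mu (Delta (v i)).
Proof.
move=> ln lm; elim: s => [|a s IH]; first by rewrite !big_nil tpair_Delta0.
by rewrite !big_cons (coalg_Delta_lin HC ln lm) IH.
Qed.

Lemma eps_lin : lfun eps. Proof. exact: coalg_eps_lin HC. Qed.

Lemma L_in_V : VL Delta L L.
Proof. by exists eps; split; [exact: eps_lin| rewrite (coalg_counitl HC)]. Qed.

Lemma keyF (g : C) (phi : C -> k) : cointegral Delta g (VL Delta L) phi ->
  forall nu, lfun nu -> phi (Xn nu) = phi L * nu g.
Proof.
move=> [dphi Hphi] nu lnu.
have [pl [Hl Hs]] := proj_ex [seq p.1 | p <- Delta L].
have Ha p : p \in Delta L -> Sm pl p.1 = p.1.
  by move=> pin; apply: Hs; apply: map_f.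
pose t := [seq (q.2, Xn q.1) | q <- pl].
have teqt : teq t (Delta L).
  move=> al be lal lbe; rewrite /tpair big_map /=.
  under eq_bigr => q _ do rewrite /Xn lfun_sum // mulr_sumr.
  rewrite exchange_big /=; apply: eq_big_seq => p pin.
  have -> : al p.1 = al (Sm pl p.1) by rewrite Ha.
  rewrite /Sm lfun_sum // mulr_suml; apply: eq_bigr => q _.
  by rewrite !lfunZ // mulrA (mulrC (al q.2)).
have tV p : p \in t -> VL Delta L p.2.
  move=> /in_map_inv [q [Hq ->]]; exists q.1; split => //; exact: Hl.
have E1 := Hphi L L_in_V t teqt tV.
rewrite /t big_map /= in E1.
have XE : Xn nu = \sum_(q <- pl) nu q.2 *: Xn q.1.
  rewrite /Xn; under eq_big_seq => p pin do rewrite -{1}(Ha p pin) /Sm lfun_sum // scaler_suml.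
  rewrite exchange_big /=; apply: eq_bigr => q _; rewrite scaler_sumr.
  by apply: eq_bigr => p _; rewrite lfunZ // scalerA mulrC.
rewrite XE.
have [_ ->] := @dual_sum _ phi _ pl (fun q => nu q.2) (fun q => Xn q.1) VL_subsp dphi
  (fun q Hq => ex_intro _ q.1 (conj (Hl q Hq) erefl)).
rewrite -lfunZ // -E1 lfun_sum //; apply: eq_bigr => q _.
by rewrite lfunZ // mulrC.
Qed.
End Coal. End Sep.

Theorem mainTheorem14 (k : fieldType) (C : lmodType k)
  (Delta : C -> seq (C * C)) (eps : C -> k)
  (HC : coalgebra Delta eps) (g L : C) (Hg : grouplike Delta g) :
  (LV Delta L g -> dim_one Delta g (VL Delta L)) /\
  (~ LV Delta L g -> dim_zero Delta g (VL Delta L)) /\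
  (forall phi : C -> k, cointegral Delta g (VL Delta L) phi ->
     (nonzero_on (VL Delta L) phi <-> phi L != 0)).
Proof.
case: Hg => gn0 gteq.
have le := eps_lin HC.
have eps_g : eps g = 1.
  have [f [lf fg]] := sep1 gn0.
  have := gteq f eps lf le; rewrite /tpair big_cons big_nil addr0 fg mul1r => <-.
  transitivity (f (\sum_(p <- Delta g) eps p.2 *: p.1)); last by rewrite (coalg_counitr HC).
  by rewrite lfun_sum //; apply: eq_bigr => p _; rewrite lfunZ // mulrC.
have phi0 phi : cointegral Delta g (VL Delta L) phi -> phi 0 = 0.
  move=> [dphi _]; case: (VL_subsp Delta L) => V0 _.
  have := dphi 1 0 0 V0 V0; rewrite scale1r addr0 mul1r => H0.
  by apply: (addrI (phi 0)); rewrite addr0 -H0.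
split; [|split].
- move=> [mu [lmu gE]].
  have muX nu : lfun nu -> mu (Xn Delta L nu) = nu g.
    move=> lnu; rewrite gE /Xn !lfun_sum //; apply: eq_bigr => p _.
    by rewrite !lfunZ // mulrC.
  exists mu; split; [split|split].
  + by move=> c x y _ _; apply: lmu.
  + move=> a [al [lal ->]] t teqt tV; apply: vsep => nu lnu.
    rewrite lfun_sum // lfunZ // -/(Xn Delta L al) muX //.
    transitivity (tpair nu mu t).
      by rewrite /tpair; apply: eq_bigr => p _; rewrite lfunZ // mulrC.
    rewrite teqt // (tpair_Delta_sum HC) //.
    rewrite -(coalg_coassoc HC lal lnu lmu L).
    have E2 : tpair al nu (Delta g) = al g * nu g.
      by rewrite gteq // /tpair big_cons big_nil addr0.
    rewrite -E2 {1}gE (tpair_Delta_sum HC) //; apply: eq_bigr => p _.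
    by rewrite mulrC.
  + exists L; split; first exact: L_in_V HC L.
    have -> : mu L = eps g.
      by rewrite -(muX eps le) /Xn (coalg_counitl HC).
    by rewrite eps_g oner_eq0.
  + move=> phi cphi; exists (phi L) => x [nu [lnu ->]].
    have := keyF HC cphi lnu; rewrite /Xn => ->.
    by rewrite -/(Xn Delta L nu) muX.
- move=> nLV phi cphi x [nu [lnu ->]].
  have sLV : subsp (LV Delta L).
    split.
      exists (fun _ => 0); split; first by move=> c x' y; rewrite mulr0 addr0.
      by rewrite big1 // => p _; rewrite scale0r.
    move=> c x' y [nu' [lnu' ->]] [mu [lmu ->]].
    exists (fun z => c * nu' z + mu z); split.
      by move=> d a b; rewrite lnu' lmu mulrDr mulrA (mulrC c d) -mulrA addrACA -mulrDr.
    rewrite scaler_sumr -big_split /=; apply: eq_bigr => p _.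
    by rewrite scalerDl scalerA.
  have [f [lf [fLV fg]]] := sep sLV nLV.
  have Xf0 : Xn Delta L f = 0.
    apply: vsep => mu lmu; rewrite lfun0 // /Xn lfun_sum //.
    transitivity (f (\sum_(p <- Delta L) mu p.2 *: p.1)).
      by rewrite lfun_sum //; apply: eq_bigr => p _; rewrite !lfunZ // mulrC.
    by apply: fLV; exists mu.
  have := keyF HC cphi lf; rewrite Xf0 fg mulr1 (phi0 _ cphi) => phiL.
  by have := keyF HC cphi lnu; rewrite /Xn => ->; rewrite -phiL mul0r.
- move=> phi cphi; split.
  + move=> [x [[nu [lnu ->]] nz]]; move: nz.
    have := keyF HC cphi lnu; rewrite /Xn => ->.
    by apply: contra => /eqP ->; rewrite mul0r.
  + by move=> nz; exists L; split => //; exact: L_in_V HC L.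
Qed.
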